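(* Let $n\ge 8$, let $f:\{0,1\}^n\to\{0,1\}$ be fully sensitive at $0$, and let $p$ be its symmetrization polynomial. Then \[ \sup_{x\in[0,n]} |p^{(4)}(x)| \geq \frac{1}{6}. \] Moreover, the only polynomial for which this inequality is tight is \[ \tilde{p}(x) = -\frac{x^{4}}{144}+\frac{5 x^{3}}{36}-\frac{125 x^{2}}{144}+\frac{125 x}{72}. \]
   Context: $f$ is fully sensitive at $0$ if $f(0^n)=0$ and $f(e_i)=1$ for every $i=1,\dots,n$ ($e_i$ the $i$-th unit vector). Let $q$ be the unique multilinear real polynomial agreeing with $f$ on $\{0,1\}^n$, of degree $d(f)$. The symmetrization polynomial of $f$ is the univariate real polynomial $p$ of degree at most $d(f)$ with $p(x_1+\dots+x_n)=\frac{1}{n!}\sum_{\pi\in S_n} q(\pi(x))$ for all $x\in\{0,1\}^n$ ($\pi(x)$ permutes coordinates); equivalently $p(k)$, $k=0,\dots,n$, is the fraction of inputs of Hamming weight $k$ on which $f=1$. $p^{(4)}$ is the fourth derivative. *)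

(* Defs.v *)
From HB Require Import structures.
From mathcomp Require Import all_boot all_order all_algebra.
From mathcomp Require Import all_classical all_reals.
Set Implicit Arguments. Unset Strict Implicit. Unset Printing Implicit Defensive.
Import Order.TTheory GRing.Theory Num.Theory.
Local Open Scope ring_scope.

Definition cube (n : nat) := {ffun 'I_n -> bool}.

Definition hweight n (x : cube n) : nat := #|[set i | x i]|.

Definition zero_in (n : nat) : cube n := [ffun _ => false].
Definition unit_in n (i : 'I_n) : cube n := [ffun j => j == i].

Definition fully_sensitive_at0 n (f : cube n -> bool) : Prop :=
  f (zero_in n) = false /\ forall i : 'I_n, f (unit_in i) = true.

Definition ind n (S : {set 'I_n}) : cube n := [ffun i => i \in S].

(* Coefficient of the monomial prod_{i in S} x_i in the unique multilinear
   real polynomial q agreeing with f on {0,1}^n (Moebius inversion). *)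
Definition mlcoef (R : nzRingType) n (f : cube n -> bool) (S : {set 'I_n}) : R :=
  \sum_(T : {set 'I_n} | T \subset S)
     (-1) ^+ (#|S| - #|T|) * (f (ind T))%:R.

Definition mldeg (R : nzRingType) n (f : cube n -> bool) : nat :=
  \max_(S : {set 'I_n} | mlcoef R f S != 0) #|S|.

Definition sym_frac (R : realType) n (f : cube n -> bool) (k : nat) : R :=
  #|[set x : cube n | (hweight x == k) && f x]|%:R
  / #|[set x : cube n | hweight x == k]|%:R.

(* p is the symmetrization polynomial of f: degree <= d(f) and
   p(k) = fraction of weight-k inputs with f = 1, for k = 0..n
   (these conditions determine p uniquely since d(f) <= n). *)
Definition is_symmetrization (R : realType) n (f : cube n -> bool)
    (p : {poly R}) : Prop :=
  (size p <= (mldeg R f).+1)%N /\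
  forall k : nat, (k <= n)%N -> p.[k%:R] = sym_frac R f k.

Definition ptilde (R : realType) : {poly R} :=
  - (1 / 144) *: 'X^4 + (5 / 36) *: 'X^3 - (125 / 144) *: 'X^2
  + (125 / 72) *: 'X.

Definition sup4 (R : realType) (n : nat) (p : {poly R}) : R :=
  sup [set `|(p^`(4)).[x]| | x in [set x : R | 0 <= x <= n%:R]]%classic.

(* Main.v *)
Require Import Defs.
From HB Require Import structures.
From mathcomp Require Import all_boot all_order all_algebra.
From mathcomp Require Import all_classical all_reals.
From mathcomp Require Import polyrcf ring lra.
Import Order.TTheory GRing.Theory Num.Theory.
Local Open Scope ring_scope.

Section S.
Variable R : realType.
Implicit Types (g : {poly R}).


Lemma rolle0 g a b : a < b -> g.[a] = 0 -> g.[b] = 0 ->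
  exists2 c, a < c < b & g^`().[c] = 0.
Proof.
move=> ab ga gb; have [c] := poly_rolle ab (etrans ga (esym gb)).
by rewrite in_itv /= => H1 H2; exists c.
Qed.

Arguments rolle0 {g a b}.

Lemma chain3 {g x0 x1 x2 x3 x4} : x0 < x1 -> x1 < x2 -> x2 < x3 -> x3 < x4 ->
  g.[x0] = 0 -> g.[x1] = 0 -> g.[x2] = 0 -> g.[x3] = 0 -> g.[x4] = 0 ->
  exists c1 c2, [/\ x0 < c1, c1 < c2, c2 < x4, g^`(3).[c1] = 0 & g^`(3).[c2] = 0].
Proof.
move=> h1 h2 h3 h4 g0 g1 g2 g3 g4.
have -> : g^`(3) = g^`()^`()^`() by rewrite !derivnS derivn0.
have [a1 /andP[a1l a1r] A1] := rolle0 h1 g0 g1.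
have [a2 /andP[a2l a2r] A2] := rolle0 h2 g1 g2.
have [a3 /andP[a3l a3r] A3] := rolle0 h3 g2 g3.
have [a4 /andP[a4l a4r] A4] := rolle0 h4 g3 g4.
have [b1 /andP[b1l b1r] B1] := rolle0 (lt_trans a1r a2l) A1 A2.
have [b2 /andP[b2l b2r] B2] := rolle0 (lt_trans a2r a3l) A2 A3.
have [b3 /andP[b3l b3r] B3] := rolle0 (lt_trans a3r a4l) A3 A4.
have [c1 /andP[c1l c1r] C1] := rolle0 (lt_trans b1r b2l) B1 B2.
have [c2 /andP[c2l c2r] C2] := rolle0 (lt_trans b2r b3l) B2 B3.
exists c1, c2; split => //.
- by rewrite (lt_trans a1l) // (lt_trans b1l).
- by rewrite (lt_trans c1r).
- by rewrite (lt_trans c2r) // (lt_trans b3r).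
Qed.

Lemma d4 (a b c d : R) :
  (a *: 'X^4 + b *: 'X^3 + c *: 'X^2 + d *: 'X)^`(4) = (a * 24)%:P.
Proof.
rewrite -['X]expr1 !derivnD !derivnZ !derivnXn /= !mulr0n !scaler0 !addr0 expr0.
by rewrite -polyCMn scale_polyC mulr_natr.
Qed.


Lemma poly_bounded (r : {poly R}) (N : R) : 0 <= N ->
  exists M, forall x, 0 <= x <= N -> `|r.[x]| <= M.
Proof.
move=> N0; exists (\sum_(i < size r) `|r`_i| * N ^+ i) => x /andP[x0 xN].
rewrite horner_coef; apply: le_trans (ler_norm_sum _ _ _) _.
apply: ler_sum => i _; rewrite normrM normrX ler_wpM2l //.
by rewrite lerXn2r ?nnegrE ?normr_ge0 // ger0_norm.
Qed.

Lemma zero_on_itv g a b : a < b -> (forall x, a <= x <= b -> g.[x] = 0) -> g = 0.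
Proof.
move=> ab H; set m := size g.
pose F := fun k : nat => a + (b - a) * (k.+1)%:R / (m.+1)%:R.
pose rs := map F (iota 0 m).
have ba0 : b - a != 0 by rewrite subr_eq0 gt_eqF.
have M0 : ((m.+1)%:R : R) != 0 by rewrite pnatr_eq0.
apply: (@roots_geq_poly_eq0 _ _ rs); last by rewrite size_map size_iota.
- apply/allP => y /mapP[k]; rewrite mem_iota add0n => /andP[_ km] ->.
  rewrite /F; apply/eqP/H; have k0 : (0 : R) <= (k.+1)%:R / (m.+1)%:R by rewrite divr_ge0.
  have k1 : (k.+1)%:R / (m.+1)%:R <= (1 : R).
    by rewrite ler_pdivrMr ?ltr0n // mul1r ler_nat ltnW.
  have ba : 0 < b - a by rewrite subr_gt0.
  rewrite -mulrA; move: k0 k1; set t := _ / _ => k0 k1.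
  apply/andP; split; nra.
- have Fi : injective F.
    move=> k1 k2; rewrite /F /= => /addrI.
  rewrite -!mulrA => /(mulfI ba0) /(mulIf (invr_neq0 M0)) /eqP.
  by rewrite eqr_nat => /eqP [].
  by rewrite /rs (map_inj_uniq Fi) iota_uniq.
Qed.


Lemma frac_bounds n (f : cube n -> bool) k : 0 <= sym_frac R f k <= 1.
Proof.
rewrite /sym_frac.
have ab : (#|[set x : cube n | (hweight x == k) && f x]| <= #|[set x : cube n | hweight x == k]|)%N.
  by apply: subset_leq_card; apply/fintype.subsetP => x; rewrite !inE => /andP[].
move: ab; set a := #|_|; set b := #|_| => ab.
case b0: (b == 0%N).
  by rewrite (eqP b0) invr0 mulr0 lexx ler01.
rewrite divr_ge0 //= ler_pdivrMr ?ltr0n ?lt0n ?b0 // mul1r ler_nat //.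
Qed.

Lemma hw0 n (x : cube n) : hweight x = 0%N -> x = zero_in n.
Proof.
rewrite /hweight => /eqP; rewrite cards_eq0 => /eqP H; apply/ffunP => i.
rewrite ffunE; apply/negbTE/negP => xi.
have : i \in [set i | x i] by rewrite inE.
by rewrite H inE.
Qed.

Lemma hw1 n (x : cube n) : hweight x = 1%N -> exists i, x = unit_in i.
Proof.
move/eqP/cards1P => [i Hi]; exists i; apply/ffunP => j; rewrite ffunE.
by have := congr1 (fun A : {set 'I_n} => j \in A) Hi; rewrite /= !inE.
Qed.

Lemma hw_unit n (i : 'I_n) : hweight (unit_in i) = 1%N.
Proof.
rewrite /hweight (_ : [set j | unit_in i j] = [set i]) ?cards1 //.
by apply/setP=> j; rewrite !inE ffunE.
Qed.

Lemma frac0 n (f : cube n -> bool) : f (zero_in n) = false -> sym_frac R f 0 = 0.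
Proof.
move=> Hf; rewrite /sym_frac (_ : [set x | (hweight x == 0%N) && f x] = finset.set0) ?cards0 ?mul0r //.
apply/setP => x; rewrite !inE; apply/negbTE/negP => /andP[/eqP/hw0 ->].
by rewrite Hf.
Qed.

Lemma frac1 n (f : cube n -> bool) : (0 < n)%N -> (forall i, f (unit_in i)) ->
  sym_frac R f 1 = 1.
Proof.
move=> n0 Hf; rewrite /sym_frac.
rewrite (_ : [set x | (hweight x == 1%N) && f x] = [set x | hweight x == 1%N]).
  apply: divff; rewrite pnatr_eq0 -lt0n card_gt0; apply/set0Pn.
  by exists (unit_in (Ordinal n0)); rewrite inE hw_unit.
apply/setP => x; rewrite !inE; case e: (hweight x == 1%N) => //=.
by move/eqP/hw1: e => [i ->]; apply: Hf.
Qed.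

End S.

Lemma ptE (R : realType) (x : R) : (ptilde R).[x] =
  -(1/144) * x^+4 + 5/36 * x^+3 - 125/144 * x^+2 + 125/72 * x.
Proof. by rewrite /ptilde !hornerE. Qed.

Lemma pt4 (R : realType) : (ptilde R)^`(4) = (- (1/6))%:P.
Proof.
by rewrite /ptilde -scaleNr d4; congr (_%:P); field.
Qed.

Theorem theorem10 (R : realType) (n : nat) (f : cube n -> bool) (p : {poly R}) :
  (8 <= n)%N -> fully_sensitive_at0 f -> is_symmetrization f p ->
  1 / 6 <= sup4 n p /\ (sup4 n p = 1 / 6 -> p = ptilde R).
Proof.
move=> n8 [Hf0 Hf1] [_ Hs].
have p0 : p.[0] = 0 by have := Hs 0%N isT; rewrite frac0.
have n0 : (0 < n)%N by apply: leq_trans n8.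
have p1 : p.[1] = 1 by have := Hs 1%N n0; rewrite frac1.
have p2 : 0 <= p.[2] <= 1 by rewrite (Hs 2%N (leq_trans _ n8)) // frac_bounds.
have p5 : 0 <= p.[5] <= 1 by rewrite (Hs 5%N (leq_trans _ n8)) // frac_bounds.
have p8 : 0 <= p.[8] <= 1 by rewrite (Hs 8%N n8) // frac_bounds.
set q := p - ptilde R.
have qE x : q.[x] = p.[x] - (ptilde R).[x] by rewrite /q !hornerE.
have q0 : q.[0] = 0 by rewrite qE ptE p0; field.
have q1 : q.[1] = 0 by rewrite qE ptE p1; field.
have q2e : q.[2] = p.[2] - 1 by rewrite qE ptE; field.
have q5e : q.[5] = p.[5] by rewrite qE ptE; field.
have q8e : q.[8] = p.[8] - 1 by rewrite qE ptE; field.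
have q4 : q^`(4) = p^`(4) + (1/6)%:P by rewrite /q derivnB pt4 polyCN opprK.
set a2 := q.[2] / 36; set a5 := - q.[5] / 180; set a8 := q.[8] / 1008.
pose Q := (a2+a5+a8) *: 'X^4 + (-14*a2 - 11*a5 - 8*a8) *: 'X^3
   + (53*a2 + 26*a5 + 17*a8) *: 'X^2 + (-40*a2 - 16*a5 - 10*a8) *: 'X.
have QE x : Q.[x] = (a2+a5+a8) * x^+4 + (-14*a2 - 11*a5 - 8*a8) * x^+3
   + (53*a2 + 26*a5 + 17*a8) * x^+2 + (-40*a2 - 16*a5 - 10*a8) * x.
  by rewrite /Q !hornerD !hornerZ !hornerXn hornerX.
set g := q - Q.
have gE x : g.[x] = q.[x] - Q.[x] by rewrite /g hornerD hornerN.
have g0 : g.[0] = 0 by rewrite gE QE q0; ring.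
have g1 : g.[1] = 0 by rewrite gE QE q1 /a2 /a5 /a8; field.
have g2 : g.[2] = 0 by rewrite gE QE /a2 /a5 /a8; field.
have g5 : g.[5] = 0 by rewrite gE QE /a2 /a5 /a8; field.
have g8 : g.[8] = 0 by rewrite gE QE /a2 /a5 /a8; field.
have l01 : (0 : R) < 1 by lra.
have l12 : (1 : R) < 2 by lra.
have l25 : (2 : R) < 5 by lra.
have l58 : (5 : R) < 8 by lra.
have [c1 [c2 [c1l c12 c2r C1 C2]]] := chain3 R l01 l12 l25 l58 g0 g1 g2 g5 g8.
have [xi /andP[xil xir] Xi] := @rolle0 R (g^`(3)) c1 c2 c12 C1 C2.
rewrite -derivnS in Xi.
have g4 : g^`(4) = p^`(4) + (1/6)%:P - ((a2+a5+a8)*24)%:P.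
  by rewrite /g derivnB q4 /Q d4.
have p4xi : (p^`(4)).[xi] = (a2+a5+a8)*24 - 1/6.
  by move: Xi; rewrite g4 !hornerE => Xi; lra.
have Asum : a2 + a5 + a8 <= 0.
  by rewrite /a2 /a5 /a8 q2e q5e q8e; lra.
set S := [set `|(p^`(4)).[x]| | x in [set x : R | 0 <= x <= n%:R]]%classic.
have sE : sup4 n p = sup S by [].
have [M HM] := poly_bounded R (p^`(4)) _ (ler0n _ n).
have hub : has_ubound S by exists M => y [x hx <-]; apply: HM.
have leS x : 0 <= x <= n%:R -> `|(p^`(4)).[x]| <= sup S.
  by move=> hx; apply: ub_le_sup hub _ _; exists x.
have n8R : (8 : R) <= n%:R by rewrite ler_nat.
have xin : 0 <= xi <= n%:R by apply/andP; split; lra.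
split.
  rewrite sE; apply: le_trans (leS _ xin); rewrite -normrN.
  apply: le_trans (ler_norm _); rewrite p4xi; lra.
rewrite sE => hs.
have := leS _ xin; rewrite hs ler_norml p4xi => /andP[h _].
have Ha : a2 + a5 + a8 = 0 by lra.
have [qq2 [qq5 qq8]] : q.[2] = 0 /\ q.[5] = 0 /\ q.[8] = 0.
  move: Ha; rewrite /a2 /a5 /a8 q2e q5e q8e => Ha.
  split; [|split]; lra.
have [d1 [d2 [d1l d12 d2r D1 D2]]] := chain3 R l01 l12 l25 l58 q0 q1 qq2 qq5 qq8.
have mono : {in `[d1, d2] &, {homo horner (q^`(3)) : x y / x <= y}}.
  apply: ler_hornerW => x; rewrite in_itv /= => /andP[x1 x2].
  change (0 <= (q^`(4)).[x]); rewrite q4 !hornerE.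
  have /leS : 0 <= x <= n%:R by apply/andP; split; lra.
  by rewrite hs ler_norml => /andP[h' _]; lra.
have q3z : q^`(3) = 0.
  apply: (zero_on_itv R _ _ _ d12) => x /andP[x1 x2].
  apply/le_anti/andP; split.
    by rewrite -D2; apply: mono; rewrite ?in_itv /= ?x1 ?x2 ?lexx ?(ltW d12).
  by rewrite -D1; apply: mono; rewrite ?in_itv /= ?x1 ?x2 ?lexx ?(ltW d12).
have sq : (size q <= 3)%N.
  apply/leq_sizeP => j j3.
  have : (q^`(3))`_(j - 3) = 0 by rewrite q3z coef0.
  rewrite coef_derivn subnKC // => /eqP.
  by rewrite mulrn_eq0 eqn0Ngt ffact_gt0 j3 /= => /eqP.
have qz : q = 0.
  apply: (@roots_geq_poly_eq0 _ _ [:: 0; 1; 2]) => //.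
    by rewrite /= !rootE q0 q1 qq2 eqxx.
  by rewrite /= !inE; lra.
by move/eqP: qz; rewrite subr_eq0 => /eqP.
Qed.
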